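(* Let $G$ be a countable vertex set with fixed vertex $o$, and let $c,b$ be conductance functions on $G$ with $b_{xy}\le c_{xy}$ for all $x,y$, such that $(G,c)$ and $(G,b)$ are connected locally finite networks. Let $\mathcal I:\mathcal H_{\mathcal E_c}\to\mathcal H_{\mathcal E_b}$ be the inclusion and $\mathcal I^*$ its adjoint. Then $\Delta_b=\mathcal I\Delta_c\mathcal I^*$.
   Context: A conductance function on a countable set $G$ is a symmetric map $c:G\times G\to[0,\infty)$ with $c_{xx}=0$; $x\sim y$ iff $c_{xy}>0$; locally finite and connected. $\mathcal E_c(u,v)=\frac12\sum_{x,y}c_{xy}\overline{(u(x)-u(y))}(v(x)-v(y))$; $\mathcal H_{\mathcal E_c}$ is the Hilbert space of finite-energy functions modulo constants with inner product $\mathcal E_c$. $v_x^{(c)}$ is the unique element of $\mathcal H_{\mathcal E_c}$ with $\langle v_x^{(c)},u\rangle_{\mathcal E_c}=u(x)-u(o)$ for all $u$. The Laplacian $(\Delta_c v)(x)=\sum_{y\sim x}c_{xy}(v(x)-v(y))$ is considered as an operator on $\mathcal H_{\mathcal E_c}$ with domain $\mathrm{span}\{v_x^{(c)}\}_{x\in G}$. Same notation for $b$. *)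

(* Defs.v *)
From HB Require Import structures.
From mathcomp Require Import all_boot all_order all_algebra.
From mathcomp Require Import all_classical all_reals all_analysis.
From mathcomp Require Import complex.
Set Implicit Arguments. Unset Strict Implicit. Unset Printing Implicit Defensive.
Import Order.TTheory GRing.Theory Num.Theory.
Local Open Scope classical_set_scope.
Local Open Scope ring_scope.

Section Networks.
Variables (R : realType) (G : countType).

Definition conductance (c : G -> G -> R) : Prop :=
  [/\ forall x y, c x y = c y x, forall x y, 0 <= c x y & forall x, c x x = 0].

Definition adj (c : G -> G -> R) : rel G := fun x y => 0 < c x y.

Definition locally_finite (c : G -> G -> R) : Prop :=
  forall x, finite_set [set y | adj c x y].

Definition net_connected (c : G -> G -> R) : Prop :=
  forall x y, exists p : seq G, path (adj c) x p && (last x p == y).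

Definition cconj (z : R[i]) : R[i] := Complex (complex.Re z) (- complex.Im z).
Definition cnormsq (z : R[i]) : R := complex.Re z ^+ 2 + complex.Im z ^+ 2.

Definition rsum (T : choiceType) (f : T -> R) : R :=
  fine (\esum_(i in [set: T]) (Num.max (f i) 0)%:E)
  - fine (\esum_(i in [set: T]) (Num.max (- f i) 0)%:E).

Definition finite_energy (c : G -> G -> R) (u : G -> R[i]) : Prop :=
  (\esum_(p in [set: G * G]) (c p.1 p.2 * cnormsq (u p.1 - u p.2))%:E < +oo)%E.

Definition energy_term (c : G -> G -> R) (u v : G -> R[i]) (p : G * G) : R[i] :=
  (c p.1 p.2)%:C%C * cconj (u p.1 - u p.2) * (v p.1 - v p.2).

Definition energy (c : G -> G -> R) (u v : G -> R[i]) : R[i] :=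
  (2^-1 : R)%:C%C *
  Complex (rsum (fun p => complex.Re (energy_term c u v p)))
          (rsum (fun p => complex.Im (energy_term c u v p))).

(* equality in H_E (functions modulo constants) *)
Definition eq_mod_const (u v : G -> R[i]) : Prop :=
  exists k : R[i], forall x, u x = v x + k.

(* v is (a representative of) the dipole v_x^{(c)} relative to o *)
Definition is_dipole (c : G -> G -> R) (o x : G) (v : G -> R[i]) : Prop :=
  finite_energy c v /\
  forall u, finite_energy c u -> energy c v u = u x - u o.

Definition in_dipole_span (c : G -> G -> R) (o : G) (w : G -> R[i]) : Prop :=
  exists (n : nat) (xs : 'I_n -> G) (a : 'I_n -> R[i]) (vs : 'I_n -> G -> R[i]),
    (forall i, is_dipole c o (xs i) (vs i)) /\
    eq_mod_const w (fun y => \sum_(i < n) a i * vs i y).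

(* (Delta_c v)(x) = sum_{y ~ x} c_xy (v x - v y)  (finite sum by local finiteness) *)
Definition laplacian (c : G -> G -> R) (v : G -> R[i]) (x : G) : R[i] :=
  (\sum_(y \in [set y | adj c x y]) (c x y)%:C%C * (v x - v y))%R.

(* A represents the adjoint I^* : H_{E_b} -> H_{E_c} of the inclusion
   I : H_{E_c} -> H_{E_b}, i.e. <I^* w, u>_c = <w, I u>_b *)
Definition is_adjoint_inclusion (c b : G -> G -> R) (A : (G -> R[i]) -> (G -> R[i]))
  : Prop :=
  (forall w, finite_energy b w -> finite_energy c (A w)) /\
  (forall w u, finite_energy b w -> finite_energy c u ->
     energy c (A w) u = energy b w u).

End Networks.

(* Main.v *)
Require Import Defs.
From HB Require Import structures.
From mathcomp Require Import all_boot all_order all_algebra.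
From mathcomp Require Import all_classical all_reals all_analysis.
From mathcomp Require Import complex.
From mathcomp Require Import ring lra.
Import Order.TTheory GRing.Theory Num.Theory.
Local Open Scope ring_scope.
Set Implicit Arguments. Unset Strict Implicit. Unset Printing Implicit Defensive.
Section RS.
Variables (R : realType) (T : choiceType).
Local Open Scope classical_set_scope.

Definition summ (f : T -> R) := (\esum_(i in [set: T]) (`|f i|)%:E < +oo)%E.

Lemma esum_finE (f : T -> R) : (forall i, 0 <= f i) ->
  (\esum_(i in [set: T]) (f i)%:E < +oo)%E ->
  \esum_(i in [set: T]) (f i)%:E = (fine (\esum_(i in [set: T]) (f i)%:E))%:E.
Proof.
move=> f0 fin; rewrite fineK // ge0_fin_numE //; apply: esum_ge0 => i _; rewrite lee_fin; exact: f0.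
Qed.

Lemma esumZ_le (k : R) (f : T -> R) : 0 <= k -> (forall i, 0 <= f i) ->
  (\esum_(i in [set: T]) (k * f i)%:E <= k%:E * \esum_(i in [set: T]) (f i)%:E)%E.
Proof.
move=> k0 f0; apply: ge_ereal_sup => _ /= [X [finX _] <-].
rewrite fsumEFin // -mulr_fsumr EFinM lee_wpmul2l ?lee_fin //.
rewrite -fsumEFin //; apply: ereal_sup_ubound; exists X => //.
Qed.
End RS.
Section RS2.
Variables (R : realType) (T : choiceType).
Local Open Scope classical_set_scope.
Implicit Types (f g h p n : T -> R).

Lemma maxr_l {x y : R} : y <= x -> Num.max x y = x.
Proof. by move=> h; apply/max_idPl. Qed.
Lemma maxr_r {x y : R} : x <= y -> Num.max x y = y.
Proof. by move=> h; apply/max_idPr. Qed.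

Lemma maxpn (x : R) : [/\ Num.max x 0 - Num.max (- x) 0 = x,
  Num.max x 0 + Num.max (- x) 0 = `|x|, 0 <= Num.max x 0 & 0 <= Num.max (-x) 0].
Proof.
have [h|h] := boolP (0 <= x); last (rewrite -ltNge in h).
  have -> : Num.max x 0 = x by apply/max_idPl.
  have -> : Num.max (- x) 0 = 0 by apply/max_idPr; rewrite oppr_le0.
  by rewrite ger0_norm //; split => //; rewrite ?subr0 ?addr0.
have -> : Num.max x 0 = 0 by apply/max_idPr; rewrite ltW.
have -> : Num.max (- x) 0 = - x by apply/max_idPl; rewrite oppr_ge0 ltW.
by rewrite ltr0_norm //; split => //; rewrite ?add0r ?sub0r ?opprK // oppr_ge0 ltW.
Qed.

Lemma ar1 (a p n : R) : a = p - n -> 0 <= n -> a <= p.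
Proof. move=> ->; lra. Qed.
Lemma ar2 (a p n : R) : a = p - n -> 0 <= p -> - a <= n.
Proof. move=> ->; lra. Qed.
Lemma ar3 (a b c d : R) : a + d = b + c -> a - b = c - d.
Proof. lra. Qed.
Lemma ar4 (P N p n a : R) : P - N = a -> a = p - n -> P + n = N + p.
Proof. lra. Qed.

Lemma maxle (x y : R) : x <= y -> 0 <= y -> Num.max x 0 <= y.
Proof.
move=> h1 h2; have [h|h] := boolP (0 <= x); last (rewrite -ltNge in h).
  by have -> : Num.max x 0 = x by apply/max_idPl.
by have -> : Num.max x 0 = 0 by apply/max_idPr; rewrite ltW.
Qed.

Lemma esumZ (k : R) f : 0 <= k -> (forall i, 0 <= f i) ->
  \esum_(i in [set: T]) (k * f i)%:E = (k%:E * \esum_(i in [set: T]) (f i)%:E)%E.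
Proof.
move=> k0 f0; have [->|kp] := eqVneq k 0.
  rewrite mul0e esum1 // => i _; by rewrite mul0r.
have kp' : 0 < k by rewrite lt_def kp k0.
apply/le_anti; rewrite esumZ_le //=.
rewrite -lee_pdivlMl //.
have -> : \esum_(i in [set: T]) (f i)%:E = \esum_(i in [set: T]) (k^-1 * (k * f i))%:E.
  by apply: eq_esum => i _; rewrite mulrA mulVf ?mul1r.
apply: esumZ_le; first by rewrite invr_ge0.
by move=> i; rewrite mulr_ge0.
Qed.

Lemma summ_bound f g h (k m : R) : 0 <= k -> 0 <= m -> summ g -> summ h ->
  (forall i, `|f i| <= k * `|g i| + m * `|h i|) -> summ f.
Proof.
move=> k0 m0 sg sh le; rewrite /summ.
apply: (@le_lt_trans _ _ (\esum_(i in [set: T]) ((k * `|g i|)%:E + (m * `|h i|)%:E))%E).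
  by apply: le_esum => i _; rewrite -EFinD lee_fin.
rewrite esumD; last 2 first.
  by move=> i _; rewrite lee_fin mulr_ge0.
  by move=> i _; rewrite lee_fin mulr_ge0.
rewrite esumZ // esumZ // (esum_finE _ sg) // (esum_finE _ sh) // -!EFinM -EFinD ltry //.
Qed.

Lemma summ_pos f : summ f -> (\esum_(i in [set: T]) (Num.max (f i) 0)%:E < +oo)%E.
Proof.
apply: le_lt_trans; apply: le_esum => i _; rewrite lee_fin.
have [_ <- _ h] := maxpn (f i); by rewrite lerDl.
Qed.

Lemma summ_neg f : summ f -> (\esum_(i in [set: T]) (Num.max (- f i) 0)%:E < +oo)%E.
Proof.
apply: le_lt_trans; apply: le_esum => i _; rewrite lee_fin.
have [_ <- h _] := maxpn (f i); by rewrite lerDr.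
Qed.

Lemma rsum_dec f p n : (forall i, 0 <= p i) -> (forall i, 0 <= n i) ->
  (forall i, f i = p i - n i) ->
  (\esum_(i in [set: T]) (p i)%:E < +oo)%E -> (\esum_(i in [set: T]) (n i)%:E < +oo)%E ->
  rsum f = fine (\esum_(i in [set: T]) (p i)%:E) - fine (\esum_(i in [set: T]) (n i)%:E).
Proof.
move=> p0 n0 fpn pf nf.
have posle : forall i, Num.max (f i) 0 <= p i.
  move=> i; apply: maxle => //; exact: ar1 (fpn i) (n0 i).
have negle : forall i, Num.max (- f i) 0 <= n i.
  move=> i; apply: maxle => //; exact: ar2 (fpn i) (p0 i).
have Pf : (\esum_(i in [set: T]) (Num.max (f i) 0)%:E < +oo)%E.
  by apply: le_lt_trans pf; apply: le_esum => i _; rewrite lee_fin.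
have Nf : (\esum_(i in [set: T]) (Num.max (- f i) 0)%:E < +oo)%E.
  by apply: le_lt_trans nf; apply: le_esum => i _; rewrite lee_fin.
have e : \esum_(i in [set: T]) ((Num.max (f i) 0)%:E + (n i)%:E)%E =
         \esum_(i in [set: T]) ((Num.max (- f i) 0)%:E + (p i)%:E)%E.
  apply: eq_esum => i _; rewrite -!EFinD; congr EFin.
  have [e1 _ _ _] := maxpn (f i); exact: ar4 e1 (fpn i).
rewrite !esumD in e; try by move=> i _; rewrite lee_fin; have [] := maxpn (f i).
have mp : forall i, 0 <= Num.max (f i) 0 by move=> i; have [] := maxpn (f i).
have mn : forall i, 0 <= Num.max (- f i) 0 by move=> i; have [] := maxpn (f i).
move: e; rewrite (esum_finE mp Pf) (esum_finE mn Nf) (esum_finE p0 pf) (esum_finE n0 nf).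
rewrite -!EFinD => -[e]; rewrite /rsum; exact: ar3.
Qed.
End RS2.
Section RS3.
Variables (R : realType) (T : choiceType).
Local Open Scope classical_set_scope.
Implicit Types (f g h p n : T -> R).

Lemma fin_esum f : (forall i, 0 <= f i) ->
  (\esum_(i in [set: T]) (f i)%:E < +oo)%E -> \esum_(i in [set: T]) (f i)%:E \is a fin_num.
Proof. by move=> f0 fin; rewrite ge0_fin_numE //; apply: esum_ge0 => i _; rewrite lee_fin. Qed.

Lemma mp0 f : forall i, 0 <= Num.max (f i) 0. Proof. by move=> i; have [] := maxpn (f i). Qed.
Lemma mn0 f : forall i, 0 <= Num.max (- f i) 0. Proof. by move=> i; have [] := maxpn (f i). Qed.

Lemma esum_posE f : summ f -> \esum_(i in [set: T]) (Num.max (f i) 0)%:E =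
  (fine (\esum_(i in [set: T]) (Num.max (f i) 0)%:E))%:E.
Proof. move=> sf; exact: (esum_finE (@mp0 f) (summ_pos sf)). Qed.
Lemma esum_negE f : summ f -> \esum_(i in [set: T]) (Num.max (- f i) 0)%:E =
  (fine (\esum_(i in [set: T]) (Num.max (- f i) 0)%:E))%:E.
Proof. move=> sf; exact: (esum_finE (@mn0 f) (summ_neg sf)). Qed.

Lemma ar5 (a b P N P' N' : R) : P - N = a -> P' - N' = b -> a + b = (P + P') - (N + N').
Proof. move=> <- <-; ring. Qed.
Lemma ar6 (a b c d : R) : (a + b) - (c + d) = (a - c) + (b - d).
Proof. ring. Qed.

Lemma rsumD f g : summ f -> summ g -> rsum (fun i => f i + g i) = rsum f + rsum g.
Proof.
move=> sf sg.
have np : forall i, 0 <= Num.max (f i) 0 + Num.max (g i) 0.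
  by move=> i; rewrite addr_ge0 // ?mp0.
have nn : forall i, 0 <= Num.max (- f i) 0 + Num.max (- g i) 0.
  by move=> i; rewrite addr_ge0 // ?mn0.
have E1 : \esum_(i in [set: T]) (Num.max (f i) 0 + Num.max (g i) 0)%:E =
  (\esum_(i in [set: T]) (Num.max (f i) 0)%:E + \esum_(i in [set: T]) (Num.max (g i) 0)%:E)%E.
  under eq_esum => i _ do rewrite EFinD.
  by rewrite esumD // => i _; rewrite lee_fin ?mp0.
have E2 : \esum_(i in [set: T]) (Num.max (- f i) 0 + Num.max (- g i) 0)%:E =
  (\esum_(i in [set: T]) (Num.max (- f i) 0)%:E + \esum_(i in [set: T]) (Num.max (- g i) 0)%:E)%E.
  under eq_esum => i _ do rewrite EFinD.
  by rewrite esumD // => i _; rewrite lee_fin ?mn0.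
rewrite (@rsum_dec _ _ _ _ _ np nn).
- rewrite E1 E2 (esum_posE sf) (esum_posE sg).
  rewrite (esum_negE sf) (esum_negE sg) -!EFinD /=.
  by rewrite /rsum ar6.
- move=> i; have [e1 _ _ _] := maxpn (f i); have [e2 _ _ _] := maxpn (g i).
  exact: ar5.
- by rewrite E1 lte_add_pinfty // summ_pos.
- by rewrite E2 lte_add_pinfty // summ_neg.
Qed.

Lemma rsumN f : rsum (fun i => - f i) = - rsum f.
Proof.
rewrite /rsum.
have -> : \esum_(i in [set: T]) (Num.max (- - f i) 0)%:E = \esum_(i in [set: T]) (Num.max (f i) 0)%:E.
  by apply: eq_esum => i _; rewrite opprK.
by rewrite opprB.
Qed.

Lemma rsumZp (k : R) f : 0 <= k -> summ f -> rsum (fun i => k * f i) = k * rsum f.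
Proof.
move=> k0 sf.
have np : forall i, 0 <= k * Num.max (f i) 0 by move=> i; rewrite mulr_ge0 ?mp0.
have nn : forall i, 0 <= k * Num.max (- f i) 0 by move=> i; rewrite mulr_ge0 ?mn0.
rewrite (@rsum_dec _ _ _ _ _ np nn).
- rewrite esumZ //; last exact: mp0. rewrite esumZ //; last exact: mn0.
  by rewrite (esum_posE sf) (esum_negE sf) -!EFinM /= -mulrBr.
- by move=> i; have [e1 _ _ _] := maxpn (f i); rewrite -{1}e1 mulrBr.
- by rewrite esumZ //; [rewrite (esum_posE sf) -EFinM ltry | exact: mp0].
- by rewrite esumZ //; [rewrite (esum_negE sf) -EFinM ltry | exact: mn0].
Qed.

Lemma rsumZ (k : R) f : summ f -> rsum (fun i => k * f i) = k * rsum f.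
Proof.
move=> sf; have [k0|k0] := boolP (0 <= k); first exact: rsumZp.
have -> : (fun i => k * f i) = (fun i => - ((- k) * f i)).
  by apply: funext => i; rewrite mulNr opprK.
rewrite rsumN rsumZp //; first by rewrite mulNr opprK.
by rewrite oppr_ge0 ltW // ltNge.
Qed.

Lemma summD f g : summ f -> summ g -> summ (fun i => f i + g i).
Proof.
move=> sf sg; apply: (@summ_bound _ _ _ f g 1 1) => // i.
by rewrite !mul1r ler_normD.
Qed.

Lemma summZ (k : R) f : summ f -> summ (fun i => k * f i).
Proof.
move=> sf; apply: (@summ_bound _ _ _ f f `|k| 0) => // i.
by rewrite mul0r addr0 normrM.
Qed.

Lemma summN f : summ f -> summ (fun i => - f i).
Proof.
move=> sf; apply: (@summ_bound _ _ _ f f 1 0) => // i.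
by rewrite mul0r addr0 mul1r normrN.
Qed.

Lemma rsum_ge0 f : (forall i, 0 <= f i) -> rsum f = fine (\esum_(i in [set: T]) (f i)%:E).
Proof.
move=> f0; rewrite /rsum.
have -> : \esum_(i in [set: T]) (Num.max (- f i) 0)%:E = 0%E.
  apply: esum1 => i _; congr EFin; apply/max_idPr; by rewrite oppr_le0.
have -> : \esum_(i in [set: T]) (Num.max (f i) 0)%:E = \esum_(i in [set: T]) (f i)%:E.
  by apply: eq_esum => i _; congr EFin; apply/max_idPl.
by rewrite subr0.
Qed.

Lemma esum_supp (F : set T) f : finite_set F -> (forall i, 0 <= f i) ->
  (forall i, ~ F i -> f i = 0) ->
  \esum_(i in [set: T]) (f i)%:E = (\sum_(i \in F) f i)%:E.
Proof.
move=> finF f0 fz.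
rewrite (eq_esum (b := fun i => if i \in F then (f i)%:E else 0%E)).
  rewrite -esum_mkcond esum_fset //; first by rewrite fsumEFin.
  by move=> i _; rewrite lee_fin.
move=> i _; case: (boolP (i \in F)) => // /negP h.
by rewrite fz // => Fi; apply: h; rewrite in_setE.
Qed.

Lemma rsum_fin (F : set T) f : finite_set F -> (forall i, ~ F i -> f i = 0) ->
  rsum f = \sum_(i \in F) f i.
Proof.
move=> finF fz; rewrite /rsum.
have -> : \esum_(i in [set: T]) (Num.max (f i) 0)%:E = (\sum_(i \in F) Num.max (f i) 0)%:E.
  apply: esum_supp => //; first exact: mp0.
  by move=> i /fz ->; apply/max_idPl.
have -> : \esum_(i in [set: T]) (Num.max (- f i) 0)%:E = (\sum_(i \in F) Num.max (- f i) 0)%:E.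
  apply: esum_supp => //; first exact: mn0.
  by move=> i /fz ->; rewrite oppr0; apply/max_idPl.
rewrite /= !fsbig_finite // -sumrB; apply: eq_bigr => i _.
by have [] := maxpn (f i).
Qed.
End RS3.
Lemma cmulE (R : realType) (a b x y : R) :
  ((Complex a b) * (Complex x y) = Complex (a * x - b * y) (a * y + b * x))%R.
Proof. by []. Qed.
Lemma caddE (R : realType) (a b x y : R) :
  ((Complex a b) + (Complex x y) = Complex (a + x) (b + y))%R.
Proof. by []. Qed.
Lemma coppE (R : realType) (a b : R) :
  (- (Complex a b) = Complex (- a) (- b))%R.
Proof. by []. Qed.
Lemma crealE (R : realType) (a : R) : ((a%:C)%C = Complex a 0).
Proof. by []. Qed.
Lemma czeroE (R : realType) : (0 : R[i]) = Complex 0 0.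
Proof. by []. Qed.

Section E.
Variables (R : realType) (G : countType) (c : G -> G -> R).
Hypothesis c0 : forall x y, 0 <= c x y.
Local Open Scope classical_set_scope.

Definition dd (u : G -> R[i]) (p : G * G) := u p.1 - u p.2.
Definition w2 (u : G -> R[i]) (p : G * G) := c p.1 p.2 * cnormsq (dd u p).
Definition ReT (u v : G -> R[i]) (p : G * G) :=
  c p.1 p.2 * (complex.Re (dd u p) * complex.Re (dd v p) + complex.Im (dd u p) * complex.Im (dd v p)).
Definition ImT (u v : G -> R[i]) (p : G * G) :=
  c p.1 p.2 * (complex.Re (dd u p) * complex.Im (dd v p) - complex.Im (dd u p) * complex.Re (dd v p)).

Lemma cnormsq_ge0 (z : R[i]) : 0 <= cnormsq z.
Proof. by rewrite /cnormsq addr_ge0 // sqr_ge0. Qed.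

Lemma termE (k : R) (z w : R[i]) : (k%:C)%C * cconj z * w =
  Complex (k * (complex.Re z * complex.Re w + complex.Im z * complex.Im w))
          (k * (complex.Re z * complex.Im w - complex.Im z * complex.Re w)).
Proof.
case: z => a b; case: w => x y; rewrite /cconj /= crealE !cmulE; congr Complex; ring.
Qed.

Lemma energyE u v : energy c u v =
  ((2^-1 : R)%:C)%C * Complex (rsum (ReT u v)) (rsum (ImT u v)).
Proof.
rewrite /energy /energy_term; congr (_ * _); congr Complex; congr rsum;
  apply: funext => p; by rewrite termE.
Qed.

Lemma fe_summ u : finite_energy c u -> summ (w2 u).
Proof.
rewrite /finite_energy /summ => h.
rewrite (eq_esum (b := fun p => (w2 u p)%:E)) //.
by move=> p _; rewrite ger0_norm // mulr_ge0 // cnormsq_ge0.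
Qed.

Lemma summ_fe u : summ (w2 u) -> finite_energy c u.
Proof.
rewrite /finite_energy /summ => h.
rewrite (eq_esum (b := fun p => (`|w2 u p|)%:E)) //.
by move=> p _; rewrite ger0_norm // mulr_ge0 // cnormsq_ge0.
Qed.

Lemma ineq1 (k a b x y : R) : 0 <= k ->
  `|k * (a * x + b * y)| <= 1 * `|k * (a ^+ 2 + b ^+ 2)| + 1 * `|k * (x ^+ 2 + y ^+ 2)|.
Proof.
move=> k0; rewrite !mul1r (ger0_norm (x := k * (a ^+ 2 + b ^+ 2))); last first.
  by rewrite mulr_ge0 // addr_ge0 // sqr_ge0.
rewrite (ger0_norm (x := k * (x ^+ 2 + y ^+ 2))); last first.
  by rewrite mulr_ge0 // addr_ge0 // sqr_ge0.
rewrite normrM (ger0_norm k0) -mulrDr ler_wpM2l // ler_norml.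
have h1 := sqr_ge0 (a + x); have h2 := sqr_ge0 (b + y).
have h3 := sqr_ge0 (a - x); have h4 := sqr_ge0 (b - y).
apply/andP; split; nra.
Qed.

Lemma ineq2 (k a b x y : R) : 0 <= k ->
  `|k * (a * y - b * x)| <= 1 * `|k * (a ^+ 2 + b ^+ 2)| + 1 * `|k * (x ^+ 2 + y ^+ 2)|.
Proof.
move=> k0; rewrite !mul1r (ger0_norm (x := k * (a ^+ 2 + b ^+ 2))); last first.
  by rewrite mulr_ge0 // addr_ge0 // sqr_ge0.
rewrite (ger0_norm (x := k * (x ^+ 2 + y ^+ 2))); last first.
  by rewrite mulr_ge0 // addr_ge0 // sqr_ge0.
rewrite normrM (ger0_norm k0) -mulrDr ler_wpM2l // ler_norml.
have h1 := sqr_ge0 (a + y); have h2 := sqr_ge0 (b + x).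
have h3 := sqr_ge0 (a - y); have h4 := sqr_ge0 (b - x).
apply/andP; split; nra.
Qed.

Lemma summ_ReT u v : finite_energy c u -> finite_energy c v -> summ (ReT u v).
Proof.
move=> fu fv; apply: (summ_bound (g := w2 u) (h := w2 v) (k := 1) (m := 1)) => //;
  try exact: fe_summ.
move=> p; exact: ineq1.
Qed.

Lemma summ_ImT u v : finite_energy c u -> finite_energy c v -> summ (ImT u v).
Proof.
move=> fu fv; apply: (summ_bound (g := w2 u) (h := w2 v) (k := 1) (m := 1)) => //;
  try exact: fe_summ.
move=> p; exact: ineq2.
Qed.
End E.
Section E2.
Variables (R : realType) (G : countType) (c : G -> G -> R).
Hypothesis c0 : forall x y, 0 <= c x y.
Local Open Scope classical_set_scope.
Implicit Types (f g u : G -> R[i]).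

Lemma rsum_lin (T : choiceType) (A B C : T -> R) (s t : R) : summ A -> summ B -> summ C ->
  rsum (fun p => A p + (s * B p + t * C p)) = rsum A + (s * rsum B + t * rsum C).
Proof.
move=> sA sB sC.
have e1 := rsumD sA (summD (summZ s sB) (summZ t sC)); rewrite /= in e1; rewrite e1.
have e2 := rsumD (summZ s sB) (summZ t sC); rewrite /= in e2; rewrite e2.
by rewrite !rsumZ.
Qed.

Lemma dd_lin f g (al : R[i]) p :
  dd (fun x => f x + al * g x) p = dd f p + al * dd g p.
Proof. rewrite /dd /=; ring. Qed.

Lemma ReT_lin f g u (al : R[i]) p :
  ReT c (fun x => f x + al * g x) u p =
  ReT c f u p + (complex.Re al * ReT c g u p + complex.Im al * ImT c g u p).
Proof.
rewrite /ReT /ImT dd_lin; case: (dd f p) => a b; case: (dd g p) => x y;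
  case: (dd u p) => s t; case: al => ar ai; rewrite !cmulE !caddE /=; ring.
Qed.

Lemma ImT_lin f g u (al : R[i]) p :
  ImT c (fun x => f x + al * g x) u p =
  ImT c f u p + (complex.Re al * ImT c g u p + (- complex.Im al) * ReT c g u p).
Proof.
rewrite /ReT /ImT dd_lin; case: (dd f p) => a b; case: (dd g p) => x y;
  case: (dd u p) => s t; case: al => ar ai; rewrite !cmulE !caddE /=; ring.
Qed.

Lemma energy_lin f g u (al : R[i]) :
  finite_energy c f -> finite_energy c g -> finite_energy c u ->
  energy c (fun x => f x + al * g x) u = energy c f u + cconj al * energy c g u.
Proof.
move=> ff fg fu; rewrite !energyE.
have -> : ReT c (fun x => f x + al * g x) u = fun p =>
  ReT c f u p + (complex.Re al * ReT c g u p + complex.Im al * ImT c g u p).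
  by apply: funext => p; rewrite ReT_lin.
have -> : ImT c (fun x => f x + al * g x) u = fun p =>
  ImT c f u p + (complex.Re al * ImT c g u p + (- complex.Im al) * ReT c g u p).
  by apply: funext => p; rewrite ImT_lin.
rewrite !rsum_lin ?summ_ReT ?summ_ImT //.
move: (rsum (ReT c f u)) (rsum (ImT c f u)) (rsum (ReT c g u)) (rsum (ImT c g u)) => X Y Z W.
case: al => ar ai; rewrite /cconj /= !crealE !cmulE !caddE; congr Complex; ring.
Qed.

Lemma fe_lin f g (al : R[i]) :
  finite_energy c f -> finite_energy c g -> finite_energy c (fun x => f x + al * g x).
Proof.
move=> ff fg; apply: summ_fe => //.
apply: (summ_bound (g := w2 c f) (h := w2 c g) (k := 2) (m := 2 * cnormsq al)) => //;
  try exact: fe_summ.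
- by rewrite mulr_ge0 // cnormsq_ge0.
move=> p; rewrite !ger0_norm ?mulr_ge0 ?cnormsq_ge0 //.
rewrite /w2 dd_lin /cnormsq; have := c0 p.1 p.2.
case: (dd f p) => a b; case: (dd g p) => x y; case: al => ar ai;
  rewrite !cmulE !caddE /= => h.
have h1 := mulr_ge0 h (sqr_ge0 (a - (ar * x - ai * y))).
have h2 := mulr_ge0 h (sqr_ge0 (b - (ar * y + ai * x))).
nra.
Qed.

Lemma energy0 u : energy c (fun _ => 0) u = 0.
Proof.
rewrite energyE.
have -> : ReT c (fun _ => 0) u = fun _ => 0.
  by apply: funext => p; rewrite /ReT /dd subrr /= !mul0r add0r mulr0.
have -> : ImT c (fun _ => 0) u = fun _ => 0.
  by apply: funext => p; rewrite /ImT /dd subrr /= !mul0r subrr mulr0.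
have -> : rsum (fun _ : G * G => (0 : R)) = 0.
  by rewrite rsum_ge0 // esum1.
by rewrite -czeroE mulr0.
Qed.

Lemma fe0 : finite_energy c (fun _ => 0).
Proof.
rewrite /finite_energy esum1 // => p _.
by rewrite subrr /cnormsq /= expr0n /= addr0 mulr0.
Qed.

Lemma dd_shift f (k : R[i]) p : dd (fun x => f x + k) p = dd f p.
Proof. rewrite /dd /=; ring. Qed.

Lemma energy_shift f (k : R[i]) u : energy c (fun x => f x + k) u = energy c f u.
Proof.
rewrite !energyE.
have -> : ReT c (fun x => f x + k) u = ReT c f u.
  by apply: funext => p; rewrite /ReT dd_shift.
have -> : ImT c (fun x => f x + k) u = ImT c f u.
  by apply: funext => p; rewrite /ImT dd_shift.
by [].
Qed.

Lemma energy_sum n (a : 'I_n -> R[i]) (fs : 'I_n -> G -> R[i]) u :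
  (forall i, finite_energy c (fs i)) -> finite_energy c u ->
  finite_energy c (fun y => \sum_(i < n) a i * fs i y) /\
  energy c (fun y => \sum_(i < n) a i * fs i y) u = \sum_(i < n) cconj (a i) * energy c (fs i) u.
Proof.
elim: n a fs => [|n IH] a fs ffs fu.
  have -> : (fun y => \sum_(i < 0) a i * fs i y) = fun _ => 0.
    by apply: funext => y; rewrite big_ord0.
  by rewrite big_ord0; split; [exact: fe0 | exact: energy0].
have -> : (fun y => \sum_(i < n.+1) a i * fs i y) = fun y =>
  (\sum_(i < n) a (widen_ord (leqnSn n) i) * fs (widen_ord (leqnSn n) i) y) +
  a ord_max * fs ord_max y.
  by apply: funext => y; rewrite big_ord_recr.
have [IH1 IH2] := IH (fun i => a (widen_ord (leqnSn n) i))
  (fun i => fs (widen_ord (leqnSn n) i)) (fun i => ffs _) fu.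
split; first exact: fe_lin.
by rewrite energy_lin // IH2 big_ord_recr.
Qed.
End E2.
Lemma Re_bigseq (R : realType) (T : Type) (s : seq T) (h : T -> R[i]) :
  complex.Re (\sum_(i <- s) h i) = \sum_(i <- s) complex.Re (h i).
Proof.
elim: s => [|a s IH]; first by rewrite !big_nil.
by rewrite !big_cons -IH; case: (h a) => ? ?; case: (\sum_(i <- s) h i).
Qed.
Lemma Im_bigseq (R : realType) (T : Type) (s : seq T) (h : T -> R[i]) :
  complex.Im (\sum_(i <- s) h i) = \sum_(i <- s) complex.Im (h i).
Proof.
elim: s => [|a s IH]; first by rewrite !big_nil.
by rewrite !big_cons -IH; case: (h a) => ? ?; case: (\sum_(i <- s) h i).
Qed.

Section L.
Variables (R : realType) (G : countType) (c : G -> G -> R).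
Hypothesis cc : conductance c.
Hypothesis lf : locally_finite c.
Local Open Scope classical_set_scope.

Lemma c_sym x y : c x y = c y x. Proof. by case: cc. Qed.
Lemma c_ge0 x y : 0 <= c x y. Proof. by case: cc. Qed.
Lemma c_diag x : c x x = 0. Proof. by case: cc. Qed.

Definition delta (y : G) : G -> R[i] := fun x => if x == y then 1 else 0.

Definition Fsupp (y : G) : set (G * G) :=
  (fun z => (y, z)) @` [set z | adj c y z] `|` (fun z => (z, y)) @` [set z | adj c y z].

Lemma Fsupp_fin y : finite_set (Fsupp y).
Proof. by rewrite /Fsupp finite_setU; split; apply: finite_image; apply: lf. Qed.

Lemma adj_neq y z : adj c y z -> z != y.
Proof. by move=> h; apply/eqP => e; move: h; rewrite e /adj c_diag ltxx. Qed.

Lemma supp_delta y p : ~ Fsupp y p -> c p.1 p.2 = 0 \/ dd (delta y) p = 0.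
Proof.
case: p => p1 p2 /= nF.
have [e|ne] := eqVneq (c p1 p2) 0; first by left.
have cp : 0 < c p1 p2 by rewrite lt_def ne c_ge0.
right; rewrite /dd /delta /=.
have [e1|n1] := eqVneq p1 y.
  exfalso; apply: nF; left; exists p2; [by rewrite /= /adj -e1 | by rewrite e1].
have [e2|n2] := eqVneq p2 y.
  exfalso; apply: nF; right; exists p1; [by rewrite /= /adj c_sym -e2 | by rewrite e2].
by rewrite subrr.
Qed.

Lemma fe_delta y : finite_energy c (delta y).
Proof.
apply: summ_fe; first exact: c_ge0.
rewrite /summ (@esum_supp _ _ (Fsupp y)) ?ltry //; first exact: Fsupp_fin.
move=> p nF; have [h|h] := supp_delta nF; by rewrite /w2 h ?mul0r ?normr0 // /cnormsq /= expr0n /= addr0 mulr0 normr0.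
Qed.

Lemma Fsupp_disj y : (fun z => (y, z)) @` [set z | adj c y z] `&`
  (fun z => (z, y)) @` [set z | adj c y z] `<=` set0.
Proof.
move=> p [[z1 h1 <-] [z2 h2 [e1 e2]]].
by move: h1; rewrite /= e2 /adj c_diag ltxx.
Qed.

Lemma rsum_delta (f : G * G -> R) y :
  (forall p, c p.1 p.2 = 0 \/ dd (delta y) p = 0 -> f p = 0) ->
  rsum f = \sum_(z \in [set z | adj c y z]) f (y, z) + \sum_(z \in [set z | adj c y z]) f (z, y).
Proof.
move=> fz; rewrite (@rsum_fin _ _ (Fsupp y)); last first.
- by move=> p /supp_delta /fz.
- exact: Fsupp_fin.
rewrite /Fsupp fsbigU0 //; try (apply: finite_image; apply: lf).
  rewrite !fsbig_image //; by move=> a b _ _ [].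
exact: Fsupp_disj.
Qed.
End L.
Arguments delta {R G} y.
Lemma halfE (R : realType) (X Y : R) :
  ((2^-1 : R)%:C)%C * Complex (X + X) (- Y + - Y) = Complex X (- Y).
Proof.
have h2 : (2 : R) != 0 by rewrite pnatr_eq0.
rewrite crealE cmulE; congr Complex; field => //.
Qed.

Lemma coneE (R : realType) : (1 : R[i]) = Complex 1 0.
Proof. by []. Qed.

Section L2.
Variables (R : realType) (G : countType) (c : G -> G -> R).
Hypothesis cc : conductance c.
Hypothesis lf : locally_finite c.
Local Open Scope classical_set_scope.

Lemma ReT_yz u y z : adj c y z -> ReT c u (delta y) (y, z) = c y z * complex.Re (u y - u z).
Proof.
move=> h; rewrite /ReT /dd /delta /= eqxx (negbTE (adj_neq cc h)) subr0 coneE.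
case: (u y - u z) => a b /=; ring.
Qed.
Lemma ReT_zy u y z : adj c y z -> ReT c u (delta y) (z, y) = c y z * complex.Re (u y - u z).
Proof.
move=> h; rewrite /ReT /dd /delta /= eqxx (negbTE (adj_neq cc h)) sub0r (c_sym cc) coneE.
case: (u y) => a b; case: (u z) => a' b'; rewrite !coppE !caddE /=; ring.
Qed.
Lemma ImT_yz u y z : adj c y z -> ImT c u (delta y) (y, z) = - (c y z * complex.Im (u y - u z)).
Proof.
move=> h; rewrite /ImT /dd /delta /= eqxx (negbTE (adj_neq cc h)) subr0 coneE.
case: (u y - u z) => a b /=; ring.
Qed.
Lemma ImT_zy u y z : adj c y z -> ImT c u (delta y) (z, y) = - (c y z * complex.Im (u y - u z)).
Proof.
move=> h; rewrite /ImT /dd /delta /= eqxx (negbTE (adj_neq cc h)) sub0r (c_sym cc) coneE.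
case: (u y) => a b; case: (u z) => a' b'; rewrite !coppE !caddE /=; ring.
Qed.

Lemma energy_delta u y : energy c u (delta y) = cconj (laplacian c u y).
Proof.
have lfy := lf y.
rewrite energyE (rsum_delta cc lf (f := ReT c u (delta y)) (y := y)); last first.
  by move=> p [h|h]; rewrite /ReT h ?mul0r // czeroE /= !mulr0 addr0 mulr0.
rewrite (rsum_delta cc lf (f := ImT c u (delta y)) (y := y)); last first.
  by move=> p [h|h]; rewrite /ImT h ?mul0r // czeroE /= !mulr0 subrr mulr0.
have -> : \sum_(z \in [set z | adj c y z]) ReT c u (delta y) (y, z) =
  \sum_(z \in [set z | adj c y z]) (c y z * complex.Re (u y - u z)).
  by apply: eq_fsbigr => z; rewrite in_setE => hz; exact: ReT_yz.
have -> : \sum_(z \in [set z | adj c y z]) ReT c u (delta y) (z, y) =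
  \sum_(z \in [set z | adj c y z]) (c y z * complex.Re (u y - u z)).
  by apply: eq_fsbigr => z; rewrite in_setE => hz; exact: ReT_zy.
have -> : \sum_(z \in [set z | adj c y z]) ImT c u (delta y) (y, z) =
  - \sum_(z \in [set z | adj c y z]) (c y z * complex.Im (u y - u z)).
  rewrite (eq_fsbigr (fun z => - (c y z * complex.Im (u y - u z)))).
    by rewrite !fsbig_finite // sumrN.
  by move=> z; rewrite in_setE => hz; exact: ImT_yz.
have -> : \sum_(z \in [set z | adj c y z]) ImT c u (delta y) (z, y) =
  - \sum_(z \in [set z | adj c y z]) (c y z * complex.Im (u y - u z)).
  rewrite (eq_fsbigr (fun z => - (c y z * complex.Im (u y - u z)))).
    by rewrite !fsbig_finite // sumrN.
  by move=> z; rewrite in_setE => hz; exact: ImT_zy.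
rewrite halfE /laplacian /cconj; congr Complex.
  rewrite !fsbig_finite // Re_bigseq; apply: eq_bigr => z _.
  by case: (u y - u z) => a b; rewrite crealE cmulE /= mul0r subr0.
rewrite !fsbig_finite // Im_bigseq; congr (- _); apply: eq_bigr => z _.
by case: (u y - u z) => a b; rewrite crealE cmulE /= mul0r addr0.
Qed.
End L2.
Lemma cnormsq_le0 (R : realType) (z : R[i]) : cnormsq z <= 0 -> z = 0.
Proof.
case: z => a b; rewrite /cnormsq /= => h.
have ha : a ^+ 2 = 0.
  apply/le_anti; rewrite sqr_ge0 andbT; have := sqr_ge0 b; lra.
have hb : b ^+ 2 = 0.
  apply/le_anti; rewrite sqr_ge0 andbT; have := sqr_ge0 a; lra.
move/eqP: ha; rewrite sqrf_eq0 => /eqP ->.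
by move/eqP: hb; rewrite sqrf_eq0 => /eqP ->.
Qed.

Lemma cconjK (R : realType) (z : R[i]) : cconj (cconj z) = z.
Proof. by case: z => a b; rewrite /cconj /= opprK. Qed.

Lemma cconjN1 (R : realType) : cconj (-1 : R[i]) = -1.
Proof. by rewrite /cconj coneE !coppE /= !oppr0. Qed.

Section F.
Variables (R : realType) (G : countType) (c : G -> G -> R).
Hypothesis cc : conductance c.
Local Open Scope classical_set_scope.

Lemma zero_energy_const (o : G) (d : G -> R[i]) : net_connected c ->
  finite_energy c d -> energy c d d = 0 -> forall x, d x = d o.
Proof.
move=> nc fd E.
have c0 := c_ge0 cc.
have hX : rsum (ReT c d d) = 0.
  move: E; rewrite energyE crealE cmulE czeroE => -[hX _].
  move/eqP: hX; rewrite mul0r subr0 mulf_eq0 invr_eq0 pnatr_eq0 /=.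
  by move/eqP.
have eW : ReT c d d = w2 c d.
  by apply: funext => p; rewrite /ReT /w2 /cnormsq !expr2.
have w0 : forall p, 0 <= w2 c d p by move=> p; rewrite /w2 mulr_ge0 // cnormsq_ge0.
have fin : (\esum_(p in [set: G * G]) (w2 c d p)%:E < +oo)%E.
  have := fe_summ c0 fd; rewrite /summ.
  by rewrite (eq_esum (b := fun p => (w2 c d p)%:E)) // => p _; rewrite ger0_norm.
have es0 : \esum_(p in [set: G * G]) (w2 c d p)%:E = 0%E.
  by rewrite (esum_finE w0 fin) -(rsum_ge0 w0) -eW hX.
have wle : forall p, w2 c d p <= 0.
  move=> p; rewrite -lee_fin (_ : (0 : R)%:E = \esum_(p in [set: G * G]) (w2 c d p)%:E); last by rewrite es0.
  apply: esum_ge; exists [set p].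
    by split => //; exact: finite_set1.
  by rewrite fsbig_set1.
have adjeq : forall x y, adj c x y -> d x = d y.
  move=> x y h; have := wle (x, y); rewrite /w2 /= => h2.
  have h3 : cnormsq (dd d (x, y)) <= 0.
    by rewrite -(pmulr_rle0 _ h).
  by move/cnormsq_le0: h3; rewrite /dd /= => /eqP; rewrite subr_eq0 => /eqP.
have pth : forall p z, path (adj c) z p -> d (last z p) = d z.
  elim => [//|a p IH] z /= /andP [hza hp].
  by rewrite IH // (adjeq _ _ hza).
move=> x; have [p /andP [hp /eqP hl]] := nc o x.
by rewrite -hl pth.
Qed.
End F.

Theorem lemma3p10 (R : realType) (G : countType) (o : G) (c b : G -> G -> R) :
  conductance c -> conductance b ->
  locally_finite c -> locally_finite b ->
  net_connected c -> net_connected b ->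
  (forall x y, b x y <= c x y) ->
  forall A : (G -> R[i]) -> (G -> R[i]),
  is_adjoint_inclusion c b A ->
  forall w : G -> R[i],
  finite_energy b w -> in_dipole_span b o w ->
  in_dipole_span c o (A w) /\
  eq_mod_const (laplacian b w) (laplacian c (A w)).
Proof.
move=> cc cb lfc lfb ncc ncb bc A [A1 A2] w fw [n [xs [a [vs [hv [k hk]]]]]].
have c0 := c_ge0 cc; have b0 := c_ge0 cb.
have febc : forall u, finite_energy c u -> finite_energy b u.
  move=> u; rewrite /finite_energy; apply: le_lt_trans; apply: le_esum => p _.
  by rewrite lee_fin ler_wpM2r // cnormsq_ge0.
split; last first.
  exists 0 => y; rewrite addr0.
  have := A2 w (delta y) fw (fe_delta cc lfc y).
  rewrite (energy_delta cc lfc) (energy_delta cb lfb) => e.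
  by rewrite -(cconjK (laplacian b w y)) -e cconjK.
exists n, xs, a, (fun i => A (vs i)); split.
  move=> i; split; first exact: A1 (hv i).1.
  move=> u fu; rewrite A2 //; first exact: (hv i).2 (febc _ fu).
  exact: (hv i).1.
pose t := fun y => \sum_(i < n) a i * A (vs i) y.
have fAv : forall i, finite_energy c (A (vs i)) by move=> i; apply: A1; exact: (hv i).1.
have fvs : forall i, finite_energy b (vs i) by move=> i; exact: (hv i).1.
have fAw := A1 w fw.
have ft : finite_energy c t by exact: (energy_sum c0 a fAv fAw).1.
pose d := fun x => A w x + (-1) * t x.
have fd : finite_energy c d by exact: fe_lin.
have Ed : forall u, finite_energy c u -> energy c d u = 0.
  move=> u fu; rewrite /d energy_lin // cconjN1 mulN1r.
  rewrite A2 //.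
  have -> : w = (fun x => (fun y => \sum_(i < n) a i * vs i y) x + k).
    by apply: funext => x; rewrite hk.
  rewrite energy_shift (energy_sum b0 a fvs (febc _ fu)).2 (energy_sum c0 a fAv fu).2.
  apply/eqP; rewrite subr_eq0; apply/eqP; apply: eq_bigr => i _.
  by rewrite A2 // ((hv i).2 _ (febc _ fu)).
have dc := zero_energy_const cc o ncc fd (Ed d fd).
exists (d o) => x; rewrite -(dc x) /d /t; ring.
Qed.
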